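(* Let $n\ge2$, let $X_1,\dots,X_n$ be infinite dimensional Hilbert spaces and $D_k\in\mathcal{B}(X_k)$. Then for every $A\in\mathcal{B}_n$, $$\bigcup_{k=1}^n\sigma(D_k)=\sigma(T_n^d(A))\cup\Delta,$$ where $\Delta$ is the set of $\lambda\in\mathbb{C}$ such that either (a) there is $k\in\{2,\dots,n-1\}$ with $\big(\lambda\in\sigma_r(D_k)$ and $\beta(D_k-\lambda)\le\sum_{s=k+1}^n\alpha(D_s-\lambda)\big)$ or $\big(\lambda\in\sigma_l(D_k)$ and $\alpha(D_k-\lambda)\le\sum_{s=1}^{k-1}\beta(D_s-\lambda)\big)$; or (b) $0<\beta(D_1-\lambda)\le\sum_{s=2}^n\alpha(D_s-\lambda)$ or $0<\alpha(D_n-\lambda)\le\sum_{s=1}^{n-1}\beta(D_s-\lambda)$. In particular, if $\Delta=\emptyset$ then $\bigcup_{k=1}^n\sigma(D_k)=\sigma(T_n^d(A))$ for every $A\in\mathcal{B}_n$.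
   Context: For a bounded operator $T$, $\alpha(T)=\dim\mathcal{N}(T)$, $\beta(T)=\operatorname{codim}\mathcal{R}(T)$, values in $\{0,1,\dots\}\cup\{\infty\}$, sums and comparisons taken in this extended set. $T$ is left invertible if $\alpha(T)=0$ and $\mathcal{R}(T)$ is closed and complemented, right invertible if $\beta(T)=0$ and $\mathcal{N}(T)$ is complemented, invertible if both. $\sigma_l,\sigma_r,\sigma$ denote the sets of $\lambda\in\mathbb{C}$ with $\lambda-T$ not left invertible, not right invertible, not invertible. $\mathcal{B}_n$ is the set of tuples $A=(A_{ij})_{1\le i<j\le n}$, $A_{ij}\in\mathcal{B}(X_j,X_i)$; $T_n^d(A)$ is the upper triangular operator matrix on $X_1\oplus\cdots\oplus X_n$ with diagonal $D_1,\dots,D_n$, entries $A_{ij}$ above the diagonal and zeros below. *)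

(* Defs.v *)
From Stdlib Require Import Reals ClassicalEpsilon Arith.
From Coquelicot Require Import Coquelicot.

Open Scope R_scope.

(** Extended naturals {0,1,...} ∪ {∞}: None = ∞. *)
Definition enat := option nat.
Definition eadd (a b : enat) : enat :=
  match a, b with Some x, Some y => Some (x + y)%nat | _, _ => None end.
Definition ele (a b : enat) : Prop :=
  match a, b with
  | _, None => True
  | None, Some _ => False
  | Some x, Some y => (x <= y)%nat
  end.
(* sum_{s=a}^{b} f s in the extended naturals (0 if b < a) *)
Fixpoint esum_len (f : nat -> enat) (a len : nat) : enat :=
  match len with
  | O => Some 0%nat
  | S l => eadd (f a) (esum_len f (S a) l)
  end.
Definition esum (f : nat -> enat) (a b : nat) : enat := esum_len f a (S b - a).

(** Sum in an abelian group over j = a .. b (zero if b < a). *)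
Fixpoint gsum_len {G : AbelianMonoid} (f : nat -> G) (a len : nat) : G :=
  match len with
  | O => zero
  | S l => plus (f a) (gsum_len f (S a) l)
  end.
Definition gsum {G : AbelianMonoid} (f : nat -> G) (a b : nat) : G :=
  gsum_len f a (S b - a).

(** A complex vector space together with its (norm) topology, given through
    sequential convergence (enough to speak of closed subspaces). *)
Record VSp := {
  car :> Type;
  vzero : car;
  vadd : car -> car -> car;
  vopp : car -> car;
  vscal : C -> car -> car;
  vcv : (nat -> car) -> car -> Prop   (* u_m --> x *)
}.

Section VSpTheory.
Variable V : VSp.

Fixpoint vlin (c : nat -> C) (v : nat -> V) (m : nat) : V :=
  match m with
  | O => vzero V
  | S k => vadd V (vlin c v k) (vscal V (c k) (v k))
  end.

Definition subspace (S : V -> Prop) : Prop :=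
  S (vzero V) /\ (forall x y, S x -> S y -> S (vadd V x y)) /\
  (forall a x, S x -> S (vscal V a x)).

Definition closed_set (S : V -> Prop) : Prop :=
  forall (u : nat -> V) (x : V), (forall m, S (u m)) -> vcv V u x -> S x.

(* v_0,...,v_{m-1} lie in S and are linearly independent modulo W *)
Definition indep_mod (S W : V -> Prop) (v : nat -> V) (m : nat) : Prop :=
  (forall i, (i < m)%nat -> S (v i)) /\
  (forall c : nat -> C, W (vlin c v m) -> forall i, (i < m)%nat -> c i = 0%C).

Definition dim_bound (S W : V -> Prop) (d : nat) : Prop :=
  forall v m, indep_mod S W v m -> (m <= d)%nat.

(* dimension of S modulo W, in {0,1,...} ∪ {∞} *)
Definition dim_mod (S W : V -> Prop) : enat :=
  match excluded_middle_informative (exists d, dim_bound S W d) with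
  | left _ => Some (epsilon (inhabits 0%nat)
                      (fun d => dim_bound S W d /\
                                forall d', dim_bound S W d' -> (d <= d')%nat))
  | right _ => None
  end.

Definition zero_sub (x : V) : Prop := x = vzero V.
Definition full_sub (x : V) : Prop := True.

Definition complemented (S : V -> Prop) : Prop :=
  exists M : V -> Prop, subspace M /\ closed_set M /\
    (forall x, S x -> M x -> x = vzero V) /\
    (forall x, exists s m, S s /\ M m /\ x = vadd V s m).
End VSpTheory.

Section Ops.
Variable V : VSp.
Variable T : V -> V.
Definition kernel (x : V) : Prop := T x = vzero V.
Definition range (y : V) : Prop := exists x, T x = y.
(* α(T) = dim N(T), β(T) = codim R(T) *)
Definition alpha : enat := dim_mod V (kernel) (zero_sub V).
Definition beta : enat := dim_mod V (full_sub V) (range).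
Definition left_invertible : Prop :=
  alpha = Some 0%nat /\ closed_set V range /\ complemented V range.
Definition right_invertible : Prop :=
  beta = Some 0%nat /\ complemented V kernel.
Definition invertible : Prop := left_invertible /\ right_invertible.
End Ops.

Definition shift (V : VSp) (T : V -> V) (l : C) : V -> V :=
  fun x => vadd V (T x) (vopp V (vscal V l x)).
(* σ_l, σ_r, σ : λ - T not left/right invertible / invertible
   (λ - T and T - λ differ by a sign, which does not affect these notions;
    we use λ - T as in the paper's definition) *)
Definition lshift (V : VSp) (T : V -> V) (l : C) : V -> V :=
  fun x => vadd V (vscal V l x) (vopp V (T x)).
Definition spec_l (V : VSp) (T : V -> V) (l : C) : Prop :=
  ~ left_invertible V (lshift V T l).
Definition spec_r (V : VSp) (T : V -> V) (l : C) : Prop :=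
  ~ right_invertible V (lshift V T l).
Definition spec (V : VSp) (T : V -> V) (l : C) : Prop :=
  ~ invertible V (lshift V T l).

Definition VSp_of (X : CompleteNormedModule C_AbsRing) : VSp := {|
  car := X; vzero := zero; vadd := plus; vopp := opp; vscal := scal;
  vcv := fun u x => forall eps : R, 0 < eps ->
           exists N, forall m, (N <= m)%nat -> norm (minus (u m) x) < eps |}.

Definition is_hilbert (X : CompleteNormedModule C_AbsRing) : Prop :=
  exists ip : X -> X -> C,
    (forall x y z, ip (plus x y) z = (ip x z + ip y z)%C) /\
    (forall (a : C) x z, ip (scal a x) z = (a * ip x z)%C) /\
    (forall x y, ip y x = Cconj (ip x y)) /\
    (forall x, 0 <= Re (ip x x)) /\
    (forall x, ip x x = 0%C -> x = zero) /\
    (forall x, norm x = sqrt (Re (ip x x))).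

Definition inf_dim (X : CompleteNormedModule C_AbsRing) : Prop :=
  dim_mod (VSp_of X) (full_sub (VSp_of X)) (zero_sub (VSp_of X)) = None.

(** Direct sum X_1 ⊕ ... ⊕ X_n, indices 1..n, with the product topology
    (equal to the norm topology of the direct sum since n is finite). *)
Section DirectSum.
Variable n : nat.
Variable X : nat -> CompleteNormedModule C_AbsRing.

Definition Idx := {i : nat | (1 <= i <= n)%nat}.
Definition DS := forall i : Idx, X (proj1_sig i).

Definition DS_space : VSp := {|
  car := DS;
  vzero := fun i => zero;
  vadd := fun p q i => plus (p i) (q i);
  vopp := fun p i => opp (p i);
  vscal := fun a p i => scal a (p i);
  vcv := fun u p => forall i : Idx, vcv (VSp_of (X (proj1_sig i)))
                                     (fun m => u m i) (p i) |}.

(* component j of p (zero outside 1..n) *)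
Definition comp (p : DS) (j : nat) : X j :=
  match le_dec 1 j, le_dec j n with
  | left H1, left H2 => p (exist _ j (conj H1 H2))
  | _, _ => zero
  end.

(* T_n^d(A): (T p)_i = D_i p_i + sum_{j=i+1}^n A_ij p_j *)
Definition Tmat (D : forall k, X k -> X k) (A : forall i j, X j -> X i)
  (p : DS) : DS :=
  fun i => plus (D (proj1_sig i) (p i))
                (gsum (fun j => A (proj1_sig i) j (comp p j))
                      (S (proj1_sig i)) n).
End DirectSum.

Definition alphaD (X : nat -> CompleteNormedModule C_AbsRing)
  (D : forall k, X k -> X k) (l : C) (k : nat) : enat :=
  alpha (VSp_of (X k)) (shift (VSp_of (X k)) (D k) l).
Definition betaD (X : nat -> CompleteNormedModule C_AbsRing)
  (D : forall k, X k -> X k) (l : C) (k : nat) : enat :=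
  beta (VSp_of (X k)) (shift (VSp_of (X k)) (D k) l).

Definition Delta_exc (n : nat) (X : nat -> CompleteNormedModule C_AbsRing)
  (D : forall k, X k -> X k) (l : C) : Prop :=
  (exists k, (2 <= k <= n - 1)%nat /\
     ((spec_r (VSp_of (X k)) (D k) l /\
         ele (betaD X D l k) (esum (alphaD X D l) (S k) n)) \/
      (spec_l (VSp_of (X k)) (D k) l /\
         ele (alphaD X D l k) (esum (betaD X D l) 1 (k - 1)))))
  \/
  ((betaD X D l 1 <> Some 0%nat /\
      ele (betaD X D l 1) (esum (alphaD X D l) 2 n)) \/
   (alphaD X D l n <> Some 0%nat /\
      ele (alphaD X D l n) (esum (betaD X D l) 1 (n - 1)))).

(* Main.v *)
Require Import Defs.
From Stdlib Require Import Reals ClassicalEpsilon Arith Lia Lra Classical FunctionalExtensionality PropExtensionality ProofIrrelevance.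
From Coquelicot Require Import Coquelicot.
Import Defs.


Record isVS (V : VSp) : Prop := mkVS {
  vaddA : forall x y z, vadd V x (vadd V y z) = vadd V (vadd V x y) z;
  vaddC : forall x y, vadd V x y = vadd V y x;
  vadd0 : forall x, vadd V x (vzero V) = x;
  vaddN : forall x, vadd V x (vopp V x) = vzero V;
  vscalA : forall a b x, vscal V a (vscal V b x) = vscal V (Cmult a b) x;
  vscal1 : forall x, vscal V (RtoC 1) x = x;
  vscalDr : forall a x y, vscal V a (vadd V x y) = vadd V (vscal V a x) (vscal V a y);
  vscalDl : forall a b x, vscal V (Cplus a b) x = vadd V (vscal V a x) (vscal V b x)
}.

Lemma VSp_of_VS (X : CompleteNormedModule C_AbsRing) : isVS (VSp_of X).
Proof.
  constructor; simpl; intros.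
  - apply plus_assoc.
  - apply plus_comm.
  - apply plus_zero_r.
  - exact (@plus_opp_r (CompleteNormedModule.AbelianGroup C_AbsRing X) x).
  - exact (@scal_assoc C_AbsRing X a b x).
  - exact (@scal_one C_AbsRing X x).
  - exact (@scal_distr_l C_AbsRing X a x y).
  - exact (@scal_distr_r C_AbsRing X a b x).
Qed.

Lemma DS_VS n X : isVS (DS_space n X).
Proof.
  constructor; simpl; intros; apply functional_extensionality_dep; intro i.
  - apply plus_assoc.
  - apply plus_comm.
  - apply plus_zero_r.
  - exact (@plus_opp_r (CompleteNormedModule.AbelianGroup C_AbsRing (X (proj1_sig i))) (x i)).
  - exact (@scal_assoc C_AbsRing _ a b (x i)).
  - exact (@scal_one C_AbsRing _ (x i)).
  - exact (@scal_distr_l C_AbsRing _ a (x i) (y i)).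
  - exact (@scal_distr_r C_AbsRing _ a b (x i)).
Qed.

Definition vlinear (V W : VSp) (f : V -> W) : Prop :=
  (forall x y, f (vadd V x y) = vadd W (f x) (f y)) /\
  (forall a x, f (vscal V a x) = vscal W a (f x)).

Section VSTheory.
Variable V : VSp.
Hypothesis HV : isVS V.

Lemma v0add x : vadd V (vzero V) x = x.
Proof. rewrite (vaddC _ HV). apply (vadd0 _ HV). Qed.

Lemma vcancel x y z : vadd V x y = vadd V x z -> y = z.
Proof.
  intro H.
  assert (E: vadd V (vopp V x) (vadd V x y) = vadd V (vopp V x) (vadd V x z)) by (rewrite H; auto).
  rewrite !(vaddA _ HV) in E. rewrite ((vaddC _ HV) (vopp V x) x) in E.
  rewrite (vaddN _ HV) in E. rewrite !v0add in E. exact E.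
Qed.

Lemma vself0 x : vadd V x x = x -> x = vzero V.
Proof. intro H. apply (vcancel x). rewrite (vadd0 _ HV). exact H. Qed.

Lemma vscal0l x : vscal V (RtoC 0) x = vzero V.
Proof.
  apply vself0. rewrite <- (vscalDl _ HV). f_equal. apply injective_projections; simpl; ring.
Qed.

Lemma vscal0r a : vscal V a (vzero V) = vzero V.
Proof.
  apply vself0. rewrite <- (vscalDr _ HV). rewrite (vadd0 _ HV). reflexivity.
Qed.

Lemma vopp_scal x : vopp V x = vscal V (Copp (RtoC 1)) x.
Proof.
  apply (vcancel x). rewrite (vaddN _ HV).
  rewrite <- (vscal1 _ HV x) at 1. rewrite <- (vscalDl _ HV).
  replace (Cplus (RtoC 1) (Copp (RtoC 1))) with (RtoC 0).
  - symmetry; apply vscal0l.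
  - apply injective_projections; simpl; ring.
Qed.

Lemma vscal_inj a x : a <> RtoC 0 -> vscal V a x = vzero V -> x = vzero V.
Proof.
  intros Ha H. rewrite <- (vscal1 _ HV x).
  replace (RtoC 1) with (Cmult (Cinv a) a) by (field; auto).
  rewrite <- (vscalA _ HV). rewrite H. apply vscal0r.
Qed.

Lemma vswap4 x y z w : vadd V (vadd V x y) (vadd V z w) = vadd V (vadd V x z) (vadd V y w).
Proof.
  rewrite !(vaddA _ HV). f_equal. rewrite <- !(vaddA _ HV). f_equal. apply (vaddC _ HV).
Qed.

Lemma vlin_ext c d v w m : (forall i, (i < m)%nat -> c i = d i /\ v i = w i) ->
  vlin V c v m = vlin V d w m.
Proof.
  induction m; intro H; simpl; auto.
  destruct (H m) as [E1 E2]; auto. rewrite E1, E2, IHm; auto.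
Qed.

Fixpoint csum (c t : nat -> C) (k : nat) : C :=
  match k with O => RtoC 0 | S k => Cplus (csum c t k) (Cmult (c k) (t k)) end.

Lemma vlin_shift c u t z k :
  vlin V c (fun i => vadd V (u i) (vscal V (t i) z)) k =
  vadd V (vlin V c u k) (vscal V (csum c t k) z).
Proof.
  induction k; simpl.
  - rewrite vscal0l, (vadd0 _ HV). reflexivity.
  - rewrite IHk. rewrite (vscalDr _ HV). rewrite (vscalA _ HV). rewrite vswap4.
    rewrite <- (vscalDl _ HV). reflexivity.
Qed.

Lemma vlin_add c u w k :
  vlin V c (fun i => vadd V (u i) (w i)) k = vadd V (vlin V c u k) (vlin V c w k).
Proof.
  induction k; simpl.
  - rewrite (vadd0 _ HV). reflexivity.
  - rewrite IHk, (vscalDr _ HV), vswap4. reflexivity.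
Qed.

Lemma vlin_scal c a u k :
  vlin V c (fun i => vscal V a (u i)) k = vscal V a (vlin V c u k).
Proof.
  induction k; simpl.
  - rewrite vscal0r. reflexivity.
  - rewrite IHk, (vscalDr _ HV), !(vscalA _ HV). f_equal. f_equal.
    apply injective_projections; simpl; ring.
Qed.

Lemma vlin_coefadd c d u k :
  vlin V (fun i => Cplus (c i) (d i)) u k = vadd V (vlin V c u k) (vlin V d u k).
Proof.
  induction k; simpl.
  - rewrite (vadd0 _ HV). reflexivity.
  - rewrite IHk, (vscalDl _ HV), vswap4. reflexivity.
Qed.

Lemma vlin_zero_coef v m : vlin V (fun _ => RtoC 0) v m = vzero V.
Proof.
  induction m; simpl; auto. rewrite IHm, vscal0l, (vadd0 _ HV). reflexivity.
Qed.

Lemma subspace_vlin S c v m : subspace V S -> (forall i, (i < m)%nat -> S (v i)) ->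
  S (vlin V c v m).
Proof.
  intros [H0 [Ha Hs]] H. induction m; simpl; auto.
  apply Ha; auto.
Qed.

Definition app (v : nat -> V) (k : nat) (x : V) : nat -> V :=
  fun i => if Nat.ltb i k then v i else x.

Lemma vlin_app c v k x : vlin V c (app v k x) (S k) = vadd V (vlin V c v k) (vscal V (c k) x).
Proof.
  simpl. unfold app at 2. rewrite Nat.ltb_irrefl. f_equal.
  apply vlin_ext. intros i Hi. split; auto. unfold app.
  destruct (Nat.ltb_spec i k); auto; lia.
Qed.

End VSTheory.


Lemma min_exists (P : nat -> Prop) d : P d -> exists d0, P d0 /\ forall d', P d' -> (d0 <= d')%nat.
Proof.
  induction d as [d IH] using (well_founded_induction lt_wf). intro Hd.
  destruct (classic (exists d', P d' /\ (d' < d)%nat)) as [[d' [H1 H2]]|H].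
  - exact (IH d' H2 H1).
  - exists d. split; auto. intros d' Hd'. destruct (le_lt_dec d d'); auto.
    exfalso; apply H; eauto.
Qed.

Lemma dim_some V S W d : dim_mod V S W = Some d ->
  dim_bound V S W d /\ forall d', dim_bound V S W d' -> (d <= d')%nat.
Proof.
  unfold dim_mod. destruct (excluded_middle_informative _) as [[d0 H]|H]; intro E; [|discriminate].
  injection E; intro; subst d. apply epsilon_spec. apply min_exists with d0; auto.
Qed.

Lemma dim_bound_some V S W d : dim_bound V S W d -> exists d0, dim_mod V S W = Some d0 /\ (d0 <= d)%nat.
Proof.
  intro H. destruct (dim_mod V S W) as [d0|] eqn:E.
  - exists d0. split; auto. apply (proj2 (dim_some _ _ _ _ E)); auto.
  - exfalso. unfold dim_mod in E. destruct (excluded_middle_informative _) as [_|H']; [discriminate|].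
    apply H'; eauto.
Qed.

Lemma dim_transfer V S W V' S' W' :
  (forall v m, indep_mod V S W v m -> exists v', indep_mod V' S' W' v' m) ->
  ele (dim_mod V S W) (dim_mod V' S' W').
Proof.
  intro H. destruct (dim_mod V' S' W') as [d'|] eqn:E'.
  2:{ destruct (dim_mod V S W); exact I. }
  destruct (dim_some _ _ _ _ E') as [Hb _].
  assert (Hb2 : dim_bound V S W d').
  { intros v m Hi. destruct (H v m Hi) as [v' Hv']. eapply Hb; eauto. }
  destruct (dim_bound_some _ _ _ _ Hb2) as [d0 [E0 Hle]]. rewrite E0. exact Hle.
Qed.

Lemma dim_zero V (HV : isVS V) S W : subspace V S -> (forall x, S x -> W x) ->
  dim_mod V S W = Some 0%nat.
Proof.
  intros HS HSW.
  assert (Hb : dim_bound V S W 0).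
  { intros v m [H1 H2]. destruct m; auto. exfalso.
    assert (E := H2 (fun _ => RtoC 1)). 
    assert (RtoC 1 = RtoC 0).
    { refine (E _ 0%nat _); [|lia]. apply HSW. apply subspace_vlin; auto. }
    injection H; intros. lra. }
  destruct (dim_bound_some _ _ _ _ Hb) as [d0 [E Hle]]. rewrite E. f_equal. lia.
Qed.

Lemma dim_zero_sub V (HV : isVS V) S W x : dim_mod V S W = Some 0%nat -> S x ->
  (forall a y, W y -> W (vscal V a y)) -> W x.
Proof.
  intros E Sx HW. destruct (dim_some _ _ _ _ E) as [Hb _].
  apply NNPP; intro Hx.
  assert ((1 <= 0)%nat); [|lia].
  apply (Hb (fun _ => x) 1%nat). split.
  - intros; auto.
  - intros c Hc i Hi. assert (i = 0)%nat by lia. subst i.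
    simpl in Hc. rewrite v0add in Hc by auto.
    apply NNPP; intro Hc0. apply Hx.
    rewrite <- (vscal1 _ HV x). replace (RtoC 1) with (Cmult (Cinv (c 0%nat)) (c 0%nat)) by (field; auto).
    rewrite <- (vscalA _ HV). apply HW; auto.
Qed.

Lemma ele_refl a : ele a a.
Proof. destruct a; simpl; auto. Qed.
Lemma ele_trans a b c : ele a b -> ele b c -> ele a c.
Proof. destruct a, b, c; simpl; intros; auto; try lia; contradiction. Qed.
Lemma eadd_comm a b : eadd a b = eadd b a.
Proof. destruct a, b; simpl; auto. f_equal; lia. Qed.
Lemma eadd_mono a b a' b' : ele a a' -> ele b b' -> ele (eadd a b) (eadd a' b').
Proof. destruct a, b, a', b'; simpl; intros; auto; try lia; contradiction. Qed.
Lemma eadd_assoc a b c : eadd a (eadd b c) = eadd (eadd a b) c.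
Proof. destruct a, b, c; simpl; auto. f_equal; lia. Qed.
Lemma ele_0 a : ele (Some 0%nat) a.
Proof. destruct a; simpl; auto; lia. Qed.

Section SubB.
Variable V : VSp.
Hypothesis HV : isVS V.

Definition pline (W : V -> Prop) (z : V) : V -> Prop :=
  fun x => exists w t, W w /\ x = vadd V w (vscal V t z).

Lemma pline_sub W z : subspace V W -> subspace V (pline W z).
Proof.
  intros [H0 [Ha Hs]]. split; [|split].
  - exists (vzero V), (RtoC 0). split; auto. rewrite (vscal0l _ HV), (vadd0 _ HV). auto.
  - intros x y [w1 [t1 [Hw1 ->]]] [w2 [t2 [Hw2 ->]]].
    exists (vadd V w1 w2), (Cplus t1 t2). split; auto.
    rewrite (vswap4 _ HV), (vscalDl _ HV). auto.
  - intros a x [w [t [Hw ->]]]. exists (vscal V a w), (Cmult a t). split; auto.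
    rewrite (vscalDr _ HV), (vscalA _ HV). auto.
Qed.

Lemma pline_in W z x : W x -> pline W z x.
Proof. intro H. exists x, (RtoC 0). split; auto. rewrite (vscal0l _ HV), (vadd0 _ HV). auto. Qed.

Lemma undo_line x s z : x = vadd V (vadd V x (vscal V s z)) (vscal V (Copp s) z).
Proof.
  rewrite <- (vaddA _ HV), <- (vscalDl _ HV).
  replace (Cplus s (Copp s)) with (RtoC 0) by (apply injective_projections; simpl; ring).
  rewrite (vscal0l _ HV), (vadd0 _ HV). auto.
Qed.

Lemma vlin_zero_ext c v k : (forall i, (i < k)%nat -> c i = RtoC 0) -> vlin V c v k = vzero V.
Proof.
  intro H. rewrite <- (vlin_zero_coef V HV v k). apply vlin_ext. intros; auto.
Qed.

Lemma scal_out W z a : subspace V W -> ~ W z -> W (vscal V a z) -> a = RtoC 0.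
Proof.
  intros [_ [_ Hs]] Hz Ha. apply NNPP; intro Hn. apply Hz.
  rewrite <- (vscal1 _ HV z). replace (RtoC 1) with (Cmult (Cinv a) a) by (field; auto).
  rewrite <- (vscalA _ HV). apply Hs; auto.
Qed.

Lemma append_indep Ss W w k z : subspace V W -> Ss z -> ~ W z ->
  indep_mod V Ss (pline W z) w k -> indep_mod V Ss W (app V w k z) (S k).
Proof.
  intros HW Sz Wz [H1 H2]. split.
  - intros i Hi. unfold app. destruct (Nat.ltb_spec i k); auto.
  - intros c Hc.
    rewrite (vlin_app V) in Hc.
    assert (Hck : forall i, (i < k)%nat -> c i = RtoC 0).
    { apply H2. exists (vadd V (vlin V c w k) (vscal V (c k) z)), (Copp (c k)). split; auto.
      apply undo_line. }
    rewrite (vlin_zero_ext c w k Hck), (v0add _ HV) in Hc.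
    assert (c k = RtoC 0) by (eapply scal_out; eauto).
    intros i Hi. destruct (Nat.eq_dec i k); [subst; auto|]. apply Hck; lia.
Qed.

Lemma sub_bound_proof : forall m v Ss U W,
  subspace V Ss -> subspace V U -> subspace V W -> (forall x, W x -> U x) ->
  indep_mod V Ss W v m ->
  forall a b, dim_bound V Ss U a -> dim_bound V (fun x => Ss x /\ U x) W b -> (m <= a + b)%nat.
Proof.
  induction m; intros v Ss U W HS HU HW HWU [Hi1 Hi2] a b Ha Hb; [lia|].
  set (vm := v m).
  assert (Svm : Ss vm) by (apply Hi1; lia).
  assert (Wvm : ~ W vm).
  { intro Hw. assert (E := Hi2 (fun i => if Nat.ltb i m then RtoC 0 else RtoC 1)).
    simpl in E. rewrite Nat.ltb_irrefl in E.
    rewrite (vlin_zero_ext _ v m) in E. 2:{ intros i Hi. destruct (Nat.ltb_spec i m); auto; lia. }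
    rewrite (v0add _ HV), (vscal1 _ HV) in E. specialize (E Hw m). 
    rewrite Nat.ltb_irrefl in E. assert (E' : RtoC 1 = RtoC 0) by (apply E; lia).
    injection E'; intros; lra. }
  assert (Hind : indep_mod V Ss (pline W vm) v m).
  { split; [intros; apply Hi1; lia|].
    intros c [w [t [Hw Ec]]] i Hi.
    assert (E := Hi2 (fun j => if Nat.ltb j m then c j else Copp t)).
    simpl in E. rewrite Nat.ltb_irrefl in E.
    assert (Hl : vlin V (fun j => if Nat.ltb j m then c j else Copp t) v m = vlin V c v m).
    { apply vlin_ext. intros j Hj. destruct (Nat.ltb_spec j m); auto; lia. }
    rewrite Hl, Ec in E. rewrite <- undo_line in E.
    specialize (E Hw i). destruct (Nat.ltb_spec i m); [apply E; lia|lia]. }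
  assert (HW2 := pline_sub W vm HW).
  destruct (classic (U vm)) as [Uvm|Uvm].
  -
    assert (b1 : (1 <= b)%nat).
    { apply (Hb (fun _ => vm) 1%nat). split; [intros; try split; auto|].
      intros c Hc i Hi. assert (i = 0)%nat by lia. subst i. simpl in Hc.
      rewrite (v0add _ HV) in Hc. apply (scal_out W vm); auto. }
    assert (Hb2 : dim_bound V (fun x => Ss x /\ U x) (pline W vm) (b - 1)).
    { intros w k Hw. assert (S k <= b)%nat; [|lia].
      apply (Hb (app V w k vm)). apply append_indep; auto. }
    assert (HWU2 : forall x, pline W vm x -> U x).
    { intros x [w [t [Hw ->]]]. destruct HU as [_ [Ha' Hs']]. apply Ha'; auto. }
    assert (IH := IHm v Ss U (pline W vm) HS HU HW2 HWU2 Hind a (b - 1)%nat Ha Hb2). lia.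
  -
    assert (a1 : (1 <= a)%nat).
    { apply (Ha (fun _ => vm) 1%nat). split; [intros; try split; auto|].
      intros c Hc i Hi. assert (i = 0)%nat by lia. subst i. simpl in Hc.
      rewrite (v0add _ HV) in Hc. apply (scal_out U vm); auto. }
    assert (Ha2 : dim_bound V Ss (pline U vm) (a - 1)).
    { intros w k Hw. assert (S k <= a)%nat; [|lia].
      apply (Ha (app V w k vm)). apply append_indep; auto. }
    assert (Hb2 : dim_bound V (fun x => Ss x /\ pline U vm x) (pline W vm) b).
    { intros x k [Hx1 Hx2].
      assert (Hch : exists f : nat -> V * C, forall i, (i < k)%nat ->
                 U (fst (f i)) /\ x i = vadd V (fst (f i)) (vscal V (snd (f i)) vm)).
      { exists (fun i => epsilon (inhabits (vzero V, RtoC 0))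
                  (fun p => U (fst p) /\ x i = vadd V (fst p) (vscal V (snd p) vm))).
        intros i Hi. apply epsilon_spec.
        destruct (Hx1 i Hi) as [_ [u [t [Hu Ex]]]]. exists (u, t). auto. }
      destruct Hch as [f Hf].
      apply (Hb (fun i => fst (f i))). split.
      - intros i Hi. destruct (Hf i Hi) as [Hu Ex]. split; auto.
        destruct HS as [_ [Sa Ssc]].
        rewrite (undo_line (fst (f i)) (snd (f i)) vm), <- Ex.
        apply Sa; [apply Hx1; auto|apply Ssc; auto].
      - intros c Hc. apply Hx2.
        rewrite (vlin_ext V c c x (fun i => vadd V (fst (f i)) (vscal V (snd (f i)) vm)) k).
        2:{ intros i Hi. split; auto. apply Hf; auto. }
        rewrite (vlin_shift V HV). exists (vlin V c (fun i => fst (f i)) k), (csum c (fun i => snd (f i)) k).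
        split; auto. }
    assert (HWU2 : forall x, pline W vm x -> pline U vm x).
    { intros x [w [t [Hw ->]]]. exists w, t. auto. }
    assert (IH := IHm v Ss (pline U vm) (pline W vm) HS (pline_sub U vm HU) HW2 HWU2 Hind (a - 1)%nat b Ha2 Hb2). lia.
Qed.
End SubB.

Lemma dim_sub V (HV : isVS V) S U W :
  subspace V S -> subspace V U -> subspace V W -> (forall x, W x -> U x) ->
  ele (dim_mod V S W) (eadd (dim_mod V S U) (dim_mod V (fun x => S x /\ U x) W)).
Proof.
  intros HS HU HW HWU.
  destruct (dim_mod V S U) as [a|] eqn:Ea; [|destruct (dim_mod V S W); exact I].
  destruct (dim_mod V (fun x => S x /\ U x) W) as [b|] eqn:Eb; [|destruct (dim_mod V S W); exact I].
  destruct (dim_some _ _ _ _ Ea) as [Ha _]. destruct (dim_some _ _ _ _ Eb) as [Hb _].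
  assert (Hab : dim_bound V S W (a + b)).
  { intros v m Hi. exact (sub_bound_proof V HV m v S U W HS HU HW HWU Hi a b Ha Hb). }
  destruct (dim_bound_some _ _ _ _ Hab) as [d0 [E0 Hle]]. rewrite E0. exact Hle.
Qed.


Section Ops.
Variable V : VSp.
Hypothesis HV : isVS V.
Variable f : V -> V.
Hypothesis Hf : vlinear V V f.

Lemma lin_zero : f (vzero V) = vzero V.
Proof.
  transitivity (f (vscal V (RtoC 0) (vzero V))).
  - f_equal. symmetry. apply (vscal0l V HV).
  - rewrite (proj2 Hf). apply (vscal0l V HV).
Qed.

Lemma range_sub : subspace V (range V f).
Proof.
  split; [|split].
  - exists (vzero V). apply lin_zero.
  - intros x y [a <-] [b <-]. exists (vadd V a b). apply (proj1 Hf).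
  - intros c x [a <-]. exists (vscal V c a). apply (proj2 Hf).
Qed.

Lemma kernel_sub : subspace V (kernel V f).
Proof.
  unfold kernel. split; [|split].
  - apply lin_zero.
  - intros x y Hx Hy. rewrite (proj1 Hf), Hx, Hy. apply (vadd0 _ HV).
  - intros c x Hx. rewrite (proj2 Hf), Hx. apply (vscal0r _ HV).
Qed.

Lemma full_sub_sub : subspace V (full_sub V).
Proof. unfold full_sub. split; auto. Qed.

Lemma zero_sub_sub : subspace V (zero_sub V).
Proof.
  unfold zero_sub. split; [|split]; auto.
  - intros x y -> ->. apply (vadd0 _ HV).
  - intros c x ->. apply (vscal0r _ HV).
Qed.

Lemma linv_inj : left_invertible V f -> forall x, f x = vzero V -> x = vzero V.
Proof.
  intros [Ha _] x Hx. apply (dim_zero_sub V HV (kernel V f) (zero_sub V) x Ha Hx).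
  intros a y ->. apply (vscal0r _ HV).
Qed.

Lemma rinv_surj : right_invertible V f -> forall y, exists x, f x = y.
Proof.
  intros [Hb _] y. apply (dim_zero_sub V HV (full_sub V) (range V f) y Hb I).
  apply range_sub.
Qed.

Hypothesis Hcv0 : forall u x, (forall m, u m = vzero V) -> vcv V u x -> x = vzero V.

Lemma bij_inv : (forall x, f x = vzero V -> x = vzero V) -> (forall y, exists x, f x = y) ->
  invertible V f.
Proof.
  intros Hi Hs. split; split.
  - unfold alpha. apply (dim_zero V HV). apply kernel_sub; auto. intros x Hx. apply Hi. exact Hx.
  - split.
    + intros u x _ _. apply Hs.
    + exists (zero_sub V). split; [apply zero_sub_sub|split].
      * intros u x Hu Hx. apply (Hcv0 u x); auto.
      * split; [intros x _ Hx; exact Hx|]. intros x. exists x, (vzero V).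
        split; [apply Hs|]. split; [reflexivity|]. symmetry; apply (vadd0 _ HV).
  - unfold beta. apply (dim_zero V HV). apply full_sub_sub. intros x _. apply Hs.
  - exists (full_sub V). split; [apply full_sub_sub|split].
    + intros u x _ _. exact I.
    + split; [intros x Hx _; apply Hi; exact Hx|]. intros x. exists (vzero V), x.
      split; [apply lin_zero|]. split; [exact I|]. symmetry; apply (v0add _ HV).
Qed.

Lemma inv_bij : invertible V f -> (forall x, f x = vzero V -> x = vzero V) /\ (forall y, exists x, f x = y).
Proof. intros [Hl Hr]. split; [apply linv_inj|apply rinv_surj]; auto. Qed.

End Ops.

Section Shift.
Variable V : VSp.
Hypothesis HV : isVS V.
Variable D : V -> V.
Hypothesis HD : vlinear V V D.
Variable l : C.

Lemma lshift_lin : vlinear V V (lshift V D l).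
Proof.
  unfold lshift. split.
  - intros x y. rewrite (proj1 HD), (vscalDr _ HV). rewrite !(vopp_scal _ HV), (vscalDr _ HV).
    apply (vswap4 _ HV).
  - intros a x. rewrite (proj2 HD), (vscalDr _ HV). rewrite !(vopp_scal _ HV), !(vscalA _ HV).
    f_equal; f_equal; apply injective_projections; simpl; ring.
Qed.

Lemma shift_lshift x : shift V D l x = vscal V (Copp (RtoC 1)) (lshift V D l x).
Proof.
  unfold shift, lshift. rewrite !(vopp_scal _ HV), (vscalDr _ HV), !(vscalA _ HV).
  rewrite (vaddC _ HV). f_equal; try reflexivity.
  rewrite <- (vscal1 _ HV (D x)) at 1. f_equal. apply injective_projections; simpl; ring.
Qed.

Lemma m1_nz : Copp (RtoC 1) <> RtoC 0.
Proof. intro H. injection H. intros. lra. Qed.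

Lemma kernel_shift : kernel V (shift V D l) = kernel V (lshift V D l).
Proof.
  apply functional_extensionality; intro x. apply propositional_extensionality. unfold kernel.
  rewrite shift_lshift. split; intro H.
  - apply (vscal_inj V HV _ _ m1_nz H).
  - rewrite H. apply (vscal0r _ HV).
Qed.

Lemma range_shift : range V (shift V D l) = range V (lshift V D l).
Proof.
  apply functional_extensionality; intro y. apply propositional_extensionality. unfold range.
  split; intros [x Hx]; exists (vscal V (Copp (RtoC 1)) x); rewrite <- Hx.
  - rewrite (proj2 lshift_lin). symmetry. apply shift_lshift.
  - rewrite shift_lshift, (proj2 lshift_lin), (vscalA _ HV).
    rewrite <- (vscal1 _ HV (lshift V D l x)) at 2. f_equal. apply injective_projections; simpl; ring.
Qed.

Lemma alpha_shift : alpha V (shift V D l) = alpha V (lshift V D l).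
Proof. unfold alpha. rewrite kernel_shift. reflexivity. Qed.
Lemma beta_shift : beta V (shift V D l) = beta V (lshift V D l).
Proof. unfold beta. rewrite range_shift. reflexivity. Qed.
End Shift.

Lemma is_linear_vlinear (X : CompleteNormedModule C_AbsRing) (D : X -> X) :
  is_linear D -> vlinear (VSp_of X) (VSp_of X) D.
Proof. intro H. split; intros; simpl; [apply (linear_plus D H)|apply (linear_scal D H)]. Qed.

Lemma cv0_X (X : CompleteNormedModule C_AbsRing) :
  forall u x, (forall m, u m = vzero (VSp_of X) ) -> vcv (VSp_of X) u x -> x = vzero (VSp_of X).
Proof.
  simpl. intros u x Hu Hcv. apply (@norm_eq_zero C_AbsRing (CompleteNormedModule.NormedModule C_AbsRing X)).
  apply Rle_antisym; [|apply norm_ge_0].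
  apply Rnot_lt_le; intro Hlt.
  destruct (Hcv (norm x) Hlt) as [N HN]. specialize (HN N (le_n N)).
  rewrite Hu in HN. unfold minus in HN. rewrite plus_zero_l in HN.
  rewrite (@norm_opp C_AbsRing (CompleteNormedModule.NormedModule C_AbsRing X)) in HN. lra.
Qed.

Lemma vlin_map (V W : VSp) (HV : isVS V) (HW : isVS W) (f : V -> W) (Hf : vlinear V W f) c v m :
  f (vlin V c v m) = vlin W c (fun i => f (v i)) m.
Proof.
  induction m; simpl.
  - transitivity (f (vscal V (RtoC 0) (vzero V))).
    + f_equal. symmetry. apply (vscal0l V HV).
    + rewrite (proj2 Hf). apply (vscal0l W HW).
  - rewrite (proj1 Hf), (proj2 Hf), IHm. reflexivity.
Qed.

Lemma vlinear_comp (U V W : VSp) (f : U -> V) (g : V -> W) :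
  vlinear U V f -> vlinear V W g -> vlinear U W (fun x => g (f x)).
Proof.
  intros [f1 f2] [g1 g2]. split; intros; [rewrite f1, g1|rewrite f2, g2]; auto.
Qed.


Lemma gsum_len_ext {G : AbelianMonoid} (f g : nat -> G) a len :
  (forall j, (a <= j < a + len)%nat -> f j = g j) -> gsum_len f a len = gsum_len g a len.
Proof.
  revert a. induction len; intros a H; simpl; auto.
  rewrite (H a) by lia. rewrite (IHlen (S a)); auto. intros; apply H; lia.
Qed.

Lemma gsum_len_zero {G : AbelianMonoid} (f : nat -> G) a len :
  (forall j, (a <= j < a + len)%nat -> f j = zero) -> gsum_len f a len = zero.
Proof.
  revert a. induction len; intros a H; simpl; auto.
  rewrite (H a) by lia. rewrite (IHlen (S a)); [apply plus_zero_r|]. intros; apply H; lia.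
Qed.

Lemma gsum_len_plus {G : AbelianMonoid} (f g : nat -> G) a len :
  gsum_len (fun j => plus (f j) (g j)) a len = plus (gsum_len f a len) (gsum_len g a len).
Proof.
  revert a. induction len; intros a; simpl.
  - symmetry; apply plus_zero_r.
  - rewrite IHlen. rewrite <- !plus_assoc. f_equal. rewrite !plus_assoc. f_equal. apply plus_comm.
Qed.

Lemma gsum_len_scal (Y : CompleteNormedModule C_AbsRing) (f : nat -> Y) (c : C) a len :
  gsum_len (fun j => scal c (f j)) a len = scal c (gsum_len f a len).
Proof.
  revert a. induction len; intros a; simpl.
  - symmetry; exact (@scal_zero_r C_AbsRing _ c).
  - rewrite IHlen. symmetry. exact (@scal_distr_l C_AbsRing _ c (f a) (gsum_len f (S a) len)).
Qed.

Lemma vlin_S V c v m : vlin V c v (S m) = vadd V (vlin V c v m) (vscal V (c m) (v m)).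
Proof. reflexivity. Qed.

Section DSs.
Variable n : nat.
Variable X : nat -> CompleteNormedModule C_AbsRing.
Variable D : forall k, X k -> X k.
Variable A : forall i j, X j -> X i.
Variable l : C.
Hypothesis HD : forall k, (1 <= k <= n)%nat -> is_linear (D k).
Hypothesis HA : forall i j, (1 <= i)%nat -> (i < j)%nat -> (j <= n)%nat -> is_linear (A i j).

Notation DSV := (DS_space n X).
Definition E k := lshift (VSp_of (X k)) (D k) l.
Definition Tp := lshift DSV (Tmat n X D A) l.
Definition G i (p : DS n X) : X i := gsum (fun j => A i j (comp n X p j)) (S i) n.

Lemma comp_in (p : DS n X) (i : Idx n) : comp n X p (proj1_sig i) = p i.
Proof.
  destruct i as [j [H1 H2]]. unfold comp. simpl.
  destruct (le_dec 1 j) as [a|a]; [|lia]. destruct (le_dec j n) as [b|b]; [|lia].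
  replace (conj a b) with (conj H1 H2) by apply proof_irrelevance. reflexivity.
Qed.

Lemma comp_out (p : DS n X) j : ~ (1 <= j <= n)%nat -> comp n X p j = zero.
Proof.
  intro H. unfold comp. destruct (le_dec 1 j); destruct (le_dec j n); auto. lia.
Qed.

Lemma comp_ext (p q : DS n X) : (forall j, (1 <= j <= n)%nat -> comp n X p j = comp n X q j) -> p = q.
Proof.
  intro H. apply functional_extensionality_dep. intro i.
  rewrite <- !comp_in. apply H. destruct i; simpl; lia.
Qed.

Lemma comp_vadd p q j : comp n X (vadd DSV p q) j = plus (comp n X p j) (comp n X q j).
Proof.
  unfold comp. destruct (le_dec 1 j); destruct (le_dec j n); simpl; auto; symmetry; apply plus_zero_r.
Qed.

Lemma comp_vscal a p j : comp n X (vscal DSV a p) j = scal a (comp n X p j).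
Proof.
  unfold comp. destruct (le_dec 1 j); destruct (le_dec j n); simpl; auto; symmetry;
  exact (@scal_zero_r C_AbsRing _ a).
Qed.

Lemma comp_vzero j : comp n X (vzero DSV) j = zero.
Proof. unfold comp. destruct (le_dec 1 j); destruct (le_dec j n); simpl; auto. Qed.

Lemma comp_lin j : vlinear DSV (VSp_of (X j)) (fun p => comp n X p j).
Proof. split; intros; [apply comp_vadd|apply comp_vscal]. Qed.

Lemma comp_vlin c v m j : comp n X (vlin DSV c v m) j = vlin (VSp_of (X j)) c (fun i => comp n X (v i) j) m.
Proof.
  induction m.
  - apply comp_vzero.
  - rewrite !vlin_S. rewrite comp_vadd, comp_vscal, IHm. reflexivity.
Qed.

Lemma A_zero i j : (1 <= i)%nat -> (i < j)%nat -> (j <= n)%nat -> A i j zero = zero.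
Proof. intros. apply (linear_zero (A i j)). apply HA; auto. Qed.

Lemma G_ext i p q : (forall j, (i < j)%nat -> comp n X p j = comp n X q j) -> G i p = G i q.
Proof.
  intro H. unfold G, gsum. apply gsum_len_ext. intros j Hj. rewrite H; auto. lia.
Qed.

Lemma G_zero i p : (1 <= i)%nat -> (forall j, (i < j)%nat -> comp n X p j = zero) -> G i p = zero.
Proof.
  intros Hi H. unfold G, gsum. apply gsum_len_zero. intros j Hj. rewrite H by lia.
  apply A_zero; lia.
Qed.

Lemma G_add i p q : (1 <= i)%nat -> G i (vadd DSV p q) = plus (G i p) (G i q).
Proof.
  intro Hi. unfold G, gsum. rewrite <- gsum_len_plus. apply gsum_len_ext. intros j Hj.
  rewrite comp_vadd. apply (linear_plus (A i j)). apply HA; lia.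
Qed.

Lemma G_scal i a p : (1 <= i)%nat -> G i (vscal DSV a p) = scal a (G i p).
Proof.
  intro Hi. unfold G, gsum. rewrite <- (gsum_len_scal (X i)). apply gsum_len_ext. intros j Hj.
  rewrite comp_vscal. apply (linear_scal (A i j)). apply HA; lia.
Qed.

Lemma E_lin k : (1 <= k <= n)%nat -> vlinear (VSp_of (X k)) (VSp_of (X k)) (E k).
Proof.
  intro Hk. apply lshift_lin. apply VSp_of_VS. apply is_linear_vlinear. apply HD; auto.
Qed.

Lemma plus_swap4 {Gm : AbelianMonoid} (a b c d : Gm) : plus (plus a b) (plus c d) = plus (plus a c) (plus b d).
Proof. rewrite <- !plus_assoc. f_equal. rewrite !plus_assoc. f_equal. apply plus_comm. Qed.

Lemma Tmat_lin : vlinear DSV DSV (Tmat n X D A).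
Proof.
  split.
  - intros p q. apply functional_extensionality_dep. intro i.
    destruct i as [j Hj].
    assert (HG := G_add j p q). 
    change (plus (D j (plus (p (exist _ j Hj)) (q (exist _ j Hj)))) (G j (vadd DSV p q)) =
            plus (plus (D j (p (exist _ j Hj))) (G j p)) (plus (D j (q (exist _ j Hj))) (G j q))).
    rewrite (linear_plus (D j) (HD j Hj)), HG by lia. apply plus_swap4.
  - intros a p. apply functional_extensionality_dep. intro i.
    destruct i as [j Hj].
    assert (HG := G_scal j a p).
    change (plus (D j (scal a (p (exist _ j Hj)))) (G j (vscal DSV a p)) =
            scal a (plus (D j (p (exist _ j Hj))) (G j p))).
    rewrite (linear_scal (D j) (HD j Hj)), HG by lia.
    symmetry. exact (@scal_distr_l C_AbsRing _ a _ _).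
Qed.

Lemma Tp_lin : vlinear DSV DSV Tp.
Proof. apply lshift_lin. apply DS_VS. apply Tmat_lin. Qed.

Lemma comp_in_nat (p : DS n X) i (Hi : (1 <= i <= n)%nat) : comp n X p i = p (exist _ i Hi).
Proof. exact (comp_in p (exist _ i Hi)). Qed.

Lemma comp_Tp p i : (1 <= i <= n)%nat ->
  comp n X (Tp p) i = plus (E i (comp n X p i)) (opp (G i p)).
Proof.
  intro Hi. rewrite !(comp_in_nat _ i Hi).
  change (plus (scal l (p (exist _ i Hi))) (opp (plus (D i (p (exist _ i Hi))) (G i p))) =
          plus (plus (scal l (p (exist _ i Hi))) (opp (D i (p (exist _ i Hi))))) (opp (G i p))).
  rewrite (@opp_plus (CompleteNormedModule.AbelianGroup C_AbsRing (X i))). apply plus_assoc.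
Qed.

Lemma E_zero k : (1 <= k <= n)%nat -> E k zero = zero.
Proof. intro Hk. exact (lin_zero _ (VSp_of_VS (X k)) _ (E_lin k Hk)). Qed.

Lemma Tp_loc p q i : (forall j, (i <= j)%nat -> comp n X p j = comp n X q j) ->
  comp n X (Tp p) i = comp n X (Tp q) i.
Proof.
  intro H. destruct (le_dec 1 i); [destruct (le_dec i n)|].
  - rewrite !comp_Tp by lia. rewrite H by lia. f_equal. f_equal. apply G_ext. intros; apply H; lia.
  - rewrite !comp_out by lia. auto.
  - rewrite !comp_out by lia. auto.
Qed.

Lemma Tp_loc0 p i : (forall j, (i <= j)%nat -> comp n X p j = zero) -> comp n X (Tp p) i = zero.
Proof.
  intro H. rewrite (Tp_loc p (vzero DSV)).
  - rewrite (lin_zero _ (DS_VS n X) _ Tp_lin). apply comp_vzero.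
  - intros. rewrite H, comp_vzero; auto.
Qed.

Definition single k (x : X k) : DS n X :=
  fun i => match Nat.eq_dec k (proj1_sig i) with
           | left e => eq_rect k X x _ e
           | right _ => zero end.

Lemma comp_single_eq k x : (1 <= k <= n)%nat -> comp n X (single k x) k = x.
Proof.
  intro Hk. rewrite (comp_in_nat _ k Hk). unfold single. simpl.
  destruct (Nat.eq_dec k k) as [e|e]; [|lia].
  rewrite (Eqdep_dec.UIP_refl_nat _ e). reflexivity.
Qed.

Lemma comp_single_ne k x j : j <> k -> comp n X (single k x) j = zero.
Proof.
  intro Hjk. destruct (le_dec 1 j); [destruct (le_dec j n)|]; [|rewrite comp_out by lia; auto..].
  rewrite (comp_in_nat _ j (conj l0 l1)). unfold single. simpl.
  destruct (Nat.eq_dec k j); [lia|auto].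
Qed.

Lemma single_lin k : (1 <= k <= n)%nat -> vlinear (VSp_of (X k)) DSV (single k).
Proof.
  intro Hk. split.
  - intros x y. apply comp_ext. intros j Hj. rewrite comp_vadd.
    destruct (Nat.eq_dec j k); [subst; rewrite !comp_single_eq; auto|].
    rewrite !comp_single_ne; auto. symmetry; apply plus_zero_r.
  - intros a x. apply comp_ext. intros j Hj. rewrite comp_vscal.
    destruct (Nat.eq_dec j k); [subst; rewrite !comp_single_eq; auto|].
    rewrite !comp_single_ne; auto. symmetry; exact (@scal_zero_r C_AbsRing _ a).
Qed.

Definition trunc k (p : DS n X) : DS n X :=
  fun i => if le_lt_dec (proj1_sig i) k then zero else p i.

Lemma comp_trunc_le k p j : (j <= k)%nat -> comp n X (trunc k p) j = zero.
Proof.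
  intro H. destruct (le_dec 1 j); [destruct (le_dec j n)|]; [|rewrite comp_out by lia; auto..].
  rewrite (comp_in_nat _ j (conj l0 l1)). unfold trunc. simpl.
  destruct (le_lt_dec j k); [auto|lia].
Qed.

Lemma comp_trunc_gt k p j : (k < j)%nat -> comp n X (trunc k p) j = comp n X p j.
Proof.
  intro H. destruct (le_dec 1 j); [destruct (le_dec j n)|]; [|rewrite !comp_out by lia; auto..].
  rewrite (comp_in_nat _ j (conj l0 l1)). unfold trunc. simpl.
  destruct (le_lt_dec j k); [lia|]. rewrite (comp_in_nat p j (conj l0 l1)). auto.
Qed.

Lemma trunc_lin k : vlinear DSV DSV (trunc k).
Proof.
  split.
  - intros x y. apply comp_ext. intros j Hj. rewrite comp_vadd.
    destruct (le_lt_dec j k); [rewrite !comp_trunc_le; auto; symmetry; apply plus_zero_r|].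
    rewrite !comp_trunc_gt, comp_vadd; auto.
  - intros a x. apply comp_ext. intros j Hj. rewrite comp_vscal.
    destruct (le_lt_dec j k); [rewrite !comp_trunc_le; auto; symmetry; exact (@scal_zero_r C_AbsRing _ a)|].
    rewrite !comp_trunc_gt, comp_vscal; auto.
Qed.

Lemma Xm1 (Y : CompleteNormedModule C_AbsRing) (t : Y) : scal (Copp (RtoC 1)) t = opp t.
Proof. symmetry. exact (vopp_scal (VSp_of Y) (VSp_of_VS Y) t). Qed.

Lemma plus_opp_zero' (Y : CompleteNormedModule C_AbsRing) (x : Y) : plus x (opp zero) = x.
Proof. rewrite (@opp_zero (CompleteNormedModule.AbelianGroup C_AbsRing Y)). apply plus_zero_r. Qed.

Lemma pocancel (Y : CompleteNormedModule C_AbsRing) (a t : Y) : plus (plus a (opp t)) t = a.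
Proof. rewrite <- plus_assoc. rewrite (@plus_opp_l (CompleteNormedModule.AbelianGroup C_AbsRing Y)). apply plus_zero_r. Qed.
Lemma poself (Y : CompleteNormedModule C_AbsRing) (a : Y) : plus a (opp a) = zero.
Proof. exact (@plus_opp_r (CompleteNormedModule.AbelianGroup C_AbsRing Y) a). Qed.
Lemma poself_l (Y : CompleteNormedModule C_AbsRing) (a : Y) : plus (opp a) a = zero.
Proof. exact (@plus_opp_l (CompleteNormedModule.AbelianGroup C_AbsRing Y) a). Qed.

Lemma poadd (Y : CompleteNormedModule C_AbsRing) (a x : Y) : plus a (plus x (opp a)) = x.
Proof. rewrite (plus_comm x), plus_assoc, poself. apply plus_zero_l. Qed.
Lemma pocancel2 (Y : CompleteNormedModule C_AbsRing) (a t : Y) : plus (plus a t) (opp t) = a.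
Proof. rewrite <- plus_assoc, poself. apply plus_zero_r. Qed.

Definition alphaE k := alpha (VSp_of (X k)) (E k).
Definition betaE k := beta (VSp_of (X k)) (E k).

Definition Kset j : DS n X -> Prop := fun p =>
  (forall i, (i < j)%nat -> comp n X p i = zero) /\
  (forall i, (j <= i)%nat -> comp n X (Tp p) i = zero).

Definition Ulow j : DS n X -> Prop := fun p => forall i, (j < i)%nat -> comp n X p i = zero.

Lemma Tp0 : Tp (vzero DSV) = vzero DSV.
Proof. exact (lin_zero _ (DS_VS n X) _ Tp_lin). Qed.

Lemma Kset_sub j : subspace DSV (Kset j).
Proof.
  split; [|split].
  - split; intros; [apply comp_vzero|rewrite Tp0; apply comp_vzero].
  - intros x y [H1 H2] [H3 H4]. split; intros i Hi.
    + rewrite comp_vadd, H1, H3 by auto. apply plus_zero_r.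
    + rewrite (proj1 Tp_lin), comp_vadd, H2, H4 by auto. apply plus_zero_r.
  - intros a x [H1 H2]. split; intros i Hi.
    + rewrite comp_vscal, H1 by auto. exact (@scal_zero_r C_AbsRing _ a).
    + rewrite (proj2 Tp_lin), comp_vscal, H2 by auto. exact (@scal_zero_r C_AbsRing _ a).
Qed.

Lemma Ulow_sub j : subspace DSV (Ulow j).
Proof.
  split; [|split].
  - intros i _. apply comp_vzero.
  - intros x y H1 H2 i Hi. rewrite comp_vadd, H1, H2 by auto. apply plus_zero_r.
  - intros a x H1 i Hi. rewrite comp_vscal, H1 by auto. exact (@scal_zero_r C_AbsRing _ a).
Qed.

Lemma inter_sub (V : VSp) (S1 S2 : V -> Prop) : subspace V S1 -> subspace V S2 ->
  subspace V (fun x => S1 x /\ S2 x).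
Proof.
  intros [a1 [b1 c1]] [a2 [b2 c2]]. split; [|split]; [split; auto| |].
  - intros x y [] []; split; auto.
  - intros a x []; split; auto.
Qed.

Lemma esum_empty f b : esum f (S b) b = Some 0%nat.
Proof. unfold esum. rewrite Nat.sub_diag. reflexivity. Qed.

Lemma esum_cons f a b : (a <= b)%nat -> esum f a b = eadd (f a) (esum f (S a) b).
Proof. intro H. unfold esum. replace (S b - a)%nat with (S (S b - S a)) by lia. reflexivity. Qed.

Lemma esum_len_snoc f a len : esum_len f a (S len) = eadd (esum_len f a len) (f (a + len)%nat).
Proof.
  revert a. induction len; intro a.
  - simpl. rewrite Nat.add_0_r. destruct (f a); simpl; auto. f_equal; lia.
  - change (esum_len f a (S (S len))) with (eadd (f a) (esum_len f (S a) (S len))).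
    rewrite IHlen. rewrite eadd_assoc. f_equal. f_equal. lia.
Qed.

Lemma esum_snoc f a b : (a <= S b)%nat -> esum f a (S b) = eadd (esum f a b) (f (S b)).
Proof.
  intro H. unfold esum. replace (S (S b) - a)%nat with (S (S b - a)) by lia.
  rewrite esum_len_snoc. f_equal. f_equal. lia.
Qed.

Lemma chainK : forall t j, (j + t = S n)%nat -> (1 <= j)%nat ->
  ele (dim_mod DSV (Kset j) (zero_sub DSV)) (esum alphaE j n).
Proof.
  induction t; intros j Hjt Hj.
  - replace j with (S n) by lia. rewrite esum_empty.
    rewrite (dim_zero DSV (DS_VS n X)); [simpl; auto| apply Kset_sub|].
    intros x [H1 _]. unfold zero_sub. apply comp_ext. intros i Hi. rewrite H1, comp_vzero; auto. lia.
  - assert (IH : ele (dim_mod DSV (Kset (S j)) (zero_sub DSV)) (esum alphaE (S j) n)).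
    { apply IHt; lia. }
    rewrite esum_cons by lia.
    eapply ele_trans.
    { apply (dim_sub DSV (DS_VS n X) (Kset j) (Ulow j) (zero_sub DSV)).
      - apply Kset_sub.
      - apply Ulow_sub.
      - apply zero_sub_sub. apply DS_VS.
      - intros x Hx i Hi. unfold zero_sub in Hx. rewrite Hx. apply comp_vzero. }
    rewrite (eadd_comm (alphaE j)). apply eadd_mono.
    + eapply ele_trans; [|exact IH]. apply dim_transfer.
      intros v m [Hv1 Hv2]. exists (fun i => trunc j (v i)). split.
      * intros i Hi. destruct (Hv1 i Hi) as [K1 K2]. split.
        -- intros i' Hi'. apply comp_trunc_le. lia.
        -- intros i' Hi'. rewrite (Tp_loc _ (v i)). apply K2; lia.
           intros j' Hj'. apply comp_trunc_gt. lia.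
      * intros c Hc. apply Hv2. unfold zero_sub in Hc.
        rewrite <- (vlin_map DSV DSV (DS_VS n X) (DS_VS n X) _ (trunc_lin j)) in Hc.
        intros i Hi. rewrite <- (comp_trunc_gt j) by auto. rewrite Hc. apply comp_vzero.
    + apply dim_transfer.
      intros v m [Hv1 Hv2]. exists (fun i => comp n X (v i) j). split.
      * intros i Hi. destruct (Hv1 i Hi) as [[K1 K2] U1]. unfold kernel.
        assert (E1 := K2 j (le_n j)). rewrite comp_Tp in E1 by lia.
        rewrite G_zero in E1 by auto. rewrite plus_opp_zero' in E1. exact E1.
      * intros c Hc. apply Hv2. unfold zero_sub in Hc |- *.
        assert (HP : Kset j (vlin DSV c v m) /\ Ulow j (vlin DSV c v m)).
        { apply (subspace_vlin DSV); auto. apply inter_sub; [apply Kset_sub|apply Ulow_sub]. }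
        destruct HP as [[P1 _] P2].
        apply comp_ext. intros i Hi. rewrite comp_vzero.
        destruct (lt_eq_lt_dec i j) as [[Hij|Hij]|Hij]; auto.
        subst i. rewrite comp_vlin. exact Hc.
Qed.


Lemma choose_fun {Y : Type} (y0 : Y) (P : nat -> Y -> Prop) m :
  (forall i, (i < m)%nat -> exists y, P i y) -> exists f : nat -> Y, forall i, (i < m)%nat -> P i (f i).
Proof.
  intro H. exists (fun i => epsilon (inhabits y0) (P i)). intros i Hi. apply epsilon_spec. auto.
Qed.

Lemma betaK (Hsurj : forall y : DS n X, exists p, Tp p = y) k : (1 <= k <= n)%nat ->
  ele (betaE k) (dim_mod DSV (Kset (S k)) (zero_sub DSV)).
Proof.
  intro Hk. unfold betaE, beta. apply dim_transfer.
  intros u m [Hu1 Hu2].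
  destruct (choose_fun (vzero DSV) (fun i p => Tp p = single k (u i)) m) as [P HP].
  { intros i _. apply Hsurj. }
  exists (fun i => trunc k (P i)). split.
  - intros i Hi. split.
    + intros i' Hi'. apply comp_trunc_le. lia.
    + intros i' Hi'. rewrite (Tp_loc _ (P i)).
      * rewrite HP by auto. apply comp_single_ne. lia.
      * intros j' Hj'. apply comp_trunc_gt. lia.
  - intros c Hc. apply Hu2. unfold zero_sub in Hc.
    rewrite <- (vlin_map DSV DSV (DS_VS n X) (DS_VS n X) _ (trunc_lin k)) in Hc.
    set (Q := vlin DSV c P m) in *.
    exists (comp n X Q k).
    assert (E1 := comp_Tp Q k Hk).
    rewrite (G_ext k Q (trunc k Q)) in E1 by (intros; rewrite comp_trunc_gt; auto).
    rewrite Hc in E1. rewrite G_zero in E1 by (try lia; intros; apply comp_vzero).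
    rewrite plus_opp_zero' in E1. rewrite <- E1.
    unfold Q. rewrite (vlin_map DSV DSV (DS_VS n X) (DS_VS n X) _ Tp_lin), comp_vlin.
    apply vlin_ext. intros i Hi. split; auto. rewrite HP by auto. apply comp_single_eq; auto.
Qed.

Definition Rset j : DS n X -> Prop := fun q => exists p,
  (forall i, (j < i)%nat -> comp n X p i = zero) /\
  (forall i, (1 <= i)%nat -> (i <= j)%nat -> comp n X (Tp p) i = comp n X q i).

Lemma Rset_sub j : subspace DSV (Rset j).
Proof.
  split; [|split].
  - exists (vzero DSV). split; intros; [apply comp_vzero|]. rewrite Tp0. auto.
  - intros x y [p [H1 H2]] [q [H3 H4]]. exists (vadd DSV p q). split; intros i Hi.
    + rewrite comp_vadd, H1, H3 by auto. apply plus_zero_r.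
    + intros Hi'. rewrite (proj1 Tp_lin), !comp_vadd, H2, H4 by auto. auto.
  - intros a x [p [H1 H2]]. exists (vscal DSV a p). split; intros i Hi.
    + rewrite comp_vscal, H1 by auto. exact (@scal_zero_r C_AbsRing _ a).
    + intros Hi'. rewrite (proj2 Tp_lin), !comp_vscal, H2 by auto. auto.
Qed.

Lemma Tp_single_top k x : (1 <= k <= n)%nat -> comp n X (Tp (single k x)) k = E k x.
Proof.
  intro Hk. rewrite comp_Tp by auto. rewrite comp_single_eq by auto.
  rewrite G_zero by (try lia; intros; apply comp_single_ne; lia). apply plus_opp_zero'.
Qed.

Lemma chainR : forall j, (j <= n)%nat ->
  ele (dim_mod DSV (full_sub DSV) (Rset j)) (esum betaE 1 j).
Proof.
  induction j; intro Hj.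
  - rewrite (dim_zero DSV (DS_VS n X)); [simpl; auto| apply full_sub_sub|].
    intros x _. exists (vzero DSV). split; intros; [apply comp_vzero|lia].
  - assert (IH := IHj ltac:(lia)).
    rewrite esum_snoc by lia.
    set (U := fun q : DS n X => exists x, E (S j) x = comp n X q (S j)).
    assert (HU : subspace DSV U).
    { assert (HE := E_lin (S j) ltac:(lia)).
      split; [|split].
      - exists zero. rewrite comp_vzero. apply E_zero. lia.
      - intros x y [a Ha] [b Hb]. exists (plus a b). rewrite comp_vadd, <- Ha, <- Hb. apply (proj1 HE).
      - intros c x [a Ha]. exists (scal c a). rewrite comp_vscal, <- Ha. apply (proj2 HE). }
    eapply ele_trans.
    { apply (dim_sub DSV (DS_VS n X) (full_sub DSV) U (Rset (S j))).
      - apply full_sub_sub.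
      - exact HU.
      - apply Rset_sub.
      - intros q [p [H1 H2]]. exists (comp n X p (S j)).
        rewrite <- H2 by lia. rewrite comp_Tp by lia.
        rewrite G_zero by (try lia; intros; apply H1; lia). symmetry; apply plus_opp_zero'. }
    rewrite (eadd_comm (esum betaE 1 j)). apply eadd_mono.
    + unfold betaE, beta. apply dim_transfer.
      intros v m [Hv1 Hv2]. exists (fun i => comp n X (v i) (S j)). split.
      * intros; exact I.
      * intros c [x Hx]. apply Hv2. exists x. rewrite Hx, comp_vlin. auto.
    + eapply ele_trans; [|exact IH]. apply dim_transfer.
      intros v m [Hv1 Hv2].
      destruct (choose_fun zero (fun i x => E (S j) x = comp n X (v i) (S j)) m) as [xs Hxs].
      { intros i Hi. apply (Hv1 i Hi). }
      set (TS := fun x : X (S j) => Tp (single (S j) x)).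
      assert (HTS : vlinear (VSp_of (X (S j))) DSV TS).
      { apply (vlinear_comp (VSp_of (X (S j))) DSV DSV (single (S j)) Tp); [apply single_lin; lia|apply Tp_lin]. }
      exists (fun i => vadd DSV (v i) (vscal DSV (Copp (RtoC 1)) (TS (xs i)))). split.
      * intros; exact I.
      * intros c [p [H1 H2]]. apply Hv2.
        set (Xs := vlin (VSp_of (X (S j))) c xs m).
        rewrite (vlin_add DSV (DS_VS n X)), (vlin_scal DSV (DS_VS n X)) in H2.
        rewrite <- (vlin_map _ _ (VSp_of_VS _) (DS_VS n X) TS HTS) in H2. fold Xs in H2.
        exists (vadd DSV p (single (S j) Xs)). split.
        -- intros i Hi. rewrite comp_vadd, H1, comp_single_ne by lia. apply plus_zero_r.
        -- intros i Hi1 Hi2. rewrite (proj1 Tp_lin), comp_vadd.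
           destruct (Nat.eq_dec i (S j)) as [->|Hne].
           ++ rewrite (Tp_loc0 p) by (intros; apply H1; lia).
              rewrite Tp_single_top by lia. rewrite plus_zero_l.
              rewrite comp_vlin. unfold Xs.
              rewrite (vlin_map _ _ (VSp_of_VS _) (VSp_of_VS _) _ (E_lin (S j) ltac:(lia))).
              apply (vlin_ext (VSp_of (X (S j)))). intros i Hi; split; auto.
           ++ rewrite H2 by lia. rewrite comp_vadd, comp_vscal. fold (TS Xs).
              rewrite Xm1. apply pocancel.
Qed.

Lemma alphaR (Hinj : forall p, Tp p = vzero DSV -> p = vzero DSV) k : (1 <= k <= n)%nat ->
  ele (alphaE k) (dim_mod DSV (full_sub DSV) (Rset (k - 1))).
Proof.
  intro Hk. unfold alphaE, alpha. apply dim_transfer.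
  intros x m [Hx1 Hx2].
  set (TS := fun y : X k => Tp (single k y)).
  assert (HTS : vlinear (VSp_of (X k)) DSV TS).
  { apply (vlinear_comp (VSp_of (X k)) DSV DSV (single k) Tp); [apply single_lin; lia|apply Tp_lin]. }
  exists (fun i => TS (x i)). split.
  - intros; exact I.
  - intros c [p [H1 H2]]. apply Hx2. unfold zero_sub.
    rewrite <- (vlin_map _ _ (VSp_of_VS _) (DS_VS n X) TS HTS) in H2.
    set (Xs := vlin (VSp_of (X k)) c x m) in *.
    assert (HXs : E k Xs = zero).
    { apply (subspace_vlin _ (kernel (VSp_of (X k)) (E k))); auto.
      apply kernel_sub. apply VSp_of_VS. apply E_lin; auto. }
    set (Z := vadd DSV (single k Xs) (vscal DSV (Copp (RtoC 1)) p)).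
    assert (HZ : Z = vzero DSV).
    { apply Hinj. apply comp_ext. intros j Hj. rewrite comp_vzero.
      unfold Z. rewrite (proj1 Tp_lin), (proj2 Tp_lin), comp_vadd, comp_vscal.
      destruct (le_lt_dec j (k - 1)).
      - rewrite H2 by lia. fold (TS Xs). rewrite Xm1. apply poself.
      - rewrite (Tp_loc0 p) by (intros; apply H1; lia).
        rewrite (@scal_zero_r C_AbsRing). rewrite plus_zero_r.
        destruct (Nat.eq_dec j k) as [->|Hne].
        + rewrite Tp_single_top by lia. exact HXs.
        + apply Tp_loc0. intros; apply comp_single_ne; lia. }
    assert (E1 : comp n X Z k = zero) by (rewrite HZ; apply comp_vzero).
    unfold Z in E1. rewrite comp_vadd, comp_vscal, comp_single_eq, H1 in E1 by lia.
    rewrite (@scal_zero_r C_AbsRing), plus_zero_r in E1. exact E1.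
Qed.

Lemma E1_inj (Hinj : forall p, Tp p = vzero DSV -> p = vzero DSV) : (1 <= n)%nat ->
  forall x, E 1 x = zero -> x = zero.
Proof.
  intros Hn x Hx.
  assert (H : single 1 x = vzero DSV).
  { apply Hinj. apply comp_ext. intros j Hj. rewrite comp_vzero.
    destruct (Nat.eq_dec j 1) as [->|Hne].
    - rewrite Tp_single_top by lia. exact Hx.
    - apply Tp_loc0. intros; apply comp_single_ne; lia. }
  rewrite <- (comp_single_eq 1 x) by lia. rewrite H. apply comp_vzero.
Qed.

Lemma En_surj (Hsurj : forall y : DS n X, exists p, Tp p = y) : (1 <= n)%nat ->
  forall y, exists x, E n x = y.
Proof.
  intros Hn y. destruct (Hsurj (single n y)) as [p Hp]. exists (comp n X p n).
  assert (E1 := comp_Tp p n ltac:(lia)).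
  rewrite G_zero in E1 by (try lia; intros; apply comp_out; lia).
  rewrite plus_opp_zero', Hp, comp_single_eq in E1 by lia. auto.
Qed.

Lemma Tp_bij : (forall k, (1 <= k <= n)%nat ->
    (forall x, E k x = zero -> x = zero) /\ (forall y, exists x, E k x = y)) ->
  (forall p, Tp p = vzero DSV -> p = vzero DSV) /\ (forall q, exists p, Tp p = q).
Proof.
  intro HE. split.
  - intros p Hp.
    assert (H : forall t i, (n - t < i)%nat -> comp n X p i = zero).
    { induction t; intros i Hi.
      - apply comp_out. lia.
      - destruct (le_lt_dec i (n - t)); [|apply IHt; lia].
        destruct (le_dec 1 i); [|apply comp_out; lia].
        assert (i = n - t)%nat by lia. subst i.
        assert (E1 := comp_Tp p (n - t) ltac:(lia)).
        rewrite Hp, comp_vzero, G_zero in E1 by (try lia; intros; apply IHt; lia).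
        rewrite plus_opp_zero' in E1. apply (HE (n - t)%nat); [lia|]. auto. }
    apply comp_ext. intros j Hj. rewrite comp_vzero. apply (H n). lia.
  - intro q.
    assert (H : forall t, exists p, forall i, (n - t < i)%nat -> comp n X (Tp p) i = comp n X q i).
    { induction t.
      - exists (vzero DSV). intros i Hi. rewrite !comp_out by lia. auto.
      - destruct IHt as [p Hp].
        destruct (le_lt_dec n t).
        + exists p. intros i Hi. apply Hp. lia.
        + set (i0 := (n - t)%nat).
          assert (Hi0 : (1 <= i0 <= n)%nat) by (unfold i0; lia).
          destruct (proj2 (HE i0 Hi0) (plus (comp n X q i0) (G i0 p))) as [x Hx].
          exists (vadd DSV p (single i0 (plus x (opp (comp n X p i0))))).
          intros i Hi.
          destruct (Nat.eq_dec i i0) as [->|Hne].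
          * rewrite comp_Tp by auto.
            rewrite comp_vadd, comp_single_eq by auto.
            rewrite (G_ext i0 _ p).
            2:{ intros j Hj. rewrite comp_vadd, comp_single_ne by lia. apply plus_zero_r. }
            rewrite poadd. rewrite Hx. apply pocancel2.
          * rewrite <- Hp by (unfold i0 in *; lia). apply Tp_loc.
            intros j Hj. rewrite comp_vadd, comp_single_ne by (unfold i0 in *; lia). apply plus_zero_r. }
    destruct (H n) as [p Hp]. exists p. apply comp_ext. intros j Hj. apply Hp. lia.
Qed.


Lemma esum_len_ext f g a len : (forall i, (a <= i < a + len)%nat -> f i = g i) ->
  esum_len f a len = esum_len g a len.
Proof.
  revert a. induction len; intros a H; simpl; auto.
  rewrite (H a) by lia. rewrite (IHlen (S a)); auto. intros; apply H; lia.
Qed.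

Lemma esum_ext f g a b : (forall i, (a <= i <= b)%nat -> f i = g i) -> esum f a b = esum g a b.
Proof. intro H. unfold esum. apply esum_len_ext. intros; apply H; lia. Qed.

Lemma alphaD_E k : (1 <= k <= n)%nat -> alphaD X D l k = alphaE k.
Proof.
  intro Hk. unfold alphaD, alphaE, E. apply alpha_shift. apply VSp_of_VS.
Qed.

Lemma betaD_E k : (1 <= k <= n)%nat -> betaD X D l k = betaE k.
Proof.
  intro Hk. unfold betaD, betaE, E. apply beta_shift. apply VSp_of_VS.
  apply is_linear_vlinear. apply HD; auto.
Qed.

Lemma cv0_DS : forall (u : nat -> DSV) x, (forall m, u m = vzero DSV) -> vcv DSV u x -> x = vzero DSV.
Proof.
  intros u x Hu Hcv. apply functional_extensionality_dep. intro i. simpl.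
  apply (cv0_X (X (proj1_sig i)) (fun m => u m i) (x i)).
  - intro m. simpl. rewrite Hu. reflexivity.
  - apply Hcv.
Qed.

Lemma E_inv_iff k : (1 <= k <= n)%nat -> invertible (VSp_of (X k)) (E k) <->
  ((forall x, E k x = zero -> x = zero) /\ (forall y, exists x, E k x = y)).
Proof.
  intro Hk. split.
  - apply inv_bij. apply VSp_of_VS. apply E_lin; auto.
  - intros [H1 H2]. apply bij_inv; auto. apply VSp_of_VS. apply E_lin; auto. apply cv0_X.
Qed.

Lemma Tp_inv_iff : invertible DSV Tp <->
  ((forall p, Tp p = vzero DSV -> p = vzero DSV) /\ (forall q, exists p, Tp p = q)).
Proof.
  split.
  - apply inv_bij. apply DS_VS. apply Tp_lin.
  - intros [H1 H2]. apply bij_inv; auto. apply DS_VS. apply Tp_lin. apply cv0_DS.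
Qed.

Lemma main_iff : (2 <= n)%nat ->
  (exists k, (1 <= k <= n)%nat /\ spec (VSp_of (X k)) (D k) l) <->
  (spec DSV (Tmat n X D A) l \/ Delta_exc n X D l).
Proof.
  intro Hn. split.
  - intros [k [Hk Hspec]].
    destruct (classic (invertible DSV Tp)) as [Hinv|Hni]; [|left; exact Hni]. right.
    destruct (proj1 Tp_inv_iff Hinv) as [Hinj Hsurj].
    assert (Hnb : ~ ((forall x, E k x = zero -> x = zero) /\ (forall y, exists x, E k x = y))).
    { intro Hb. apply Hspec. apply (proj2 (E_inv_iff k Hk) Hb). }
    destruct (classic (forall y, exists x, E k x = y)) as [Ks|Kns].
    + assert (Kni : ~ (forall x, E k x = zero -> x = zero)) by tauto.
      assert (Hk1 : k <> 1%nat).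
      { intro; subst k. apply Kni. apply E1_inj; auto; lia. }
      assert (Hal : ele (alphaE k) (esum betaE 1 (k - 1))).
      { eapply ele_trans. apply alphaR; auto. apply chainR. lia. }
      rewrite <- (alphaD_E k Hk) in Hal.
      rewrite (esum_ext betaE (betaD X D l) 1 (k - 1)) in Hal.
      2:{ intros i Hi. symmetry. apply betaD_E. lia. }
      destruct (Nat.eq_dec k n) as [->|Hkn].
      * right. right. split; auto.
        intro H0. apply Kni. rewrite (alphaD_E n Hk) in H0.
        intros x Hx. apply (dim_zero_sub _ (VSp_of_VS (X n)) _ _ x H0 Hx).
        intros a y ->. apply (vscal0r _ (VSp_of_VS (X n))).
      * left. exists k. split; [lia|]. right. split; auto.
        intro HL. apply Kni. apply (linv_inj _ (VSp_of_VS (X k))); auto.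
    + assert (Hk1 : k <> n).
      { intro; subst k. apply Kns. apply En_surj; auto; lia. }
      assert (Hbe : ele (betaE k) (esum alphaE (S k) n)).
      { eapply ele_trans. apply betaK; auto. apply (chainK (n - k)); lia. }
      rewrite <- (betaD_E k Hk) in Hbe.
      rewrite (esum_ext alphaE (alphaD X D l) (S k) n) in Hbe.
      2:{ intros i Hi. symmetry. apply alphaD_E. lia. }
      destruct (Nat.eq_dec k 1) as [->|Hk1'].
      * right. left. split; auto.
        intro H0. apply Kns. rewrite (betaD_E 1 Hk) in H0.
        intros y. apply (dim_zero_sub _ (VSp_of_VS (X 1)) _ _ y H0 I).
        apply (range_sub _ (VSp_of_VS (X 1))). apply E_lin; auto.
      * left. exists k. split; [lia|]. left. split; auto.
        intro HR. apply Kns. apply (rinv_surj _ (VSp_of_VS (X k)) _ (E_lin k Hk)); auto.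
  - intros [Hs|Hd].
    + apply NNPP; intro Hno. apply Hs. apply (proj2 Tp_inv_iff). apply Tp_bij.
      intros k Hk. apply (E_inv_iff k Hk). apply NNPP; intro Hk'. apply Hno. exists k. split; auto.
    + destruct Hd as [[k [Hk [[Hr _]|[Hl _]]]]|[[Hb _]|[Ha _]]].
      * exists k. split; [lia|]. intros [_ HR]. apply Hr; exact HR.
      * exists k. split; [lia|]. intros [HL _]. apply Hl; exact HL.
      * exists 1%nat. split; [lia|]. intros [_ [Hb0 _]]. apply Hb.
        rewrite betaD_E by lia. exact Hb0.
      * exists n. split; [lia|]. intros [[Ha0 _] _]. apply Ha.
        rewrite alphaD_E by lia. exact Ha0.
Qed.

End DSs.


Theorem mainTheorem15 :
  forall (n : nat) (X : nat -> CompleteNormedModule C_AbsRing)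
         (D : forall k, X k -> X k),
  (2 <= n)%nat ->
  (forall k, (1 <= k <= n)%nat -> is_hilbert (X k) /\ inf_dim (X k)) ->
  (forall k, (1 <= k <= n)%nat -> is_linear (D k)) ->
  forall A : forall i j, X j -> X i,
  (forall i j, (1 <= i)%nat -> (i < j)%nat -> (j <= n)%nat -> is_linear (A i j)) ->
  (forall l : C,
     (exists k, (1 <= k <= n)%nat /\ spec (VSp_of (X k)) (D k) l) <->
     (spec (DS_space n X) (Tmat n X D A) l \/ Delta_exc n X D l)) /\
  ((forall l : C, ~ Delta_exc n X D l) ->
   forall l : C,
     (exists k, (1 <= k <= n)%nat /\ spec (VSp_of (X k)) (D k) l) <->
     spec (DS_space n X) (Tmat n X D A) l).
Proof.
  intros n X D Hn _ HD A HA. split.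
  - intro l. exact (main_iff n X D A l HD HA Hn).
  - intros HnD l. rewrite (main_iff n X D A l HD HA Hn). split.
    + intros [H|H]; [exact H|]. exfalso. exact (HnD l H).
    + intro H. left. exact H.
Qed.
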